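(* Let $\mathfrak A$ be a finite dimensional $C^*$-algebra and $\Phi:\mathfrak A\to\mathfrak A$ a (not necessarily unital) $*$-endomorphism. Then $\sigma(\Phi)\subset\{0\}\cup\mathbb T$.
   Context: $\sigma(\Phi)$ is the spectrum (set of eigenvalues) of the linear map $\Phi$ on $\mathfrak A$; $\mathbb T=\{\lambda\in\mathbb C:|\lambda|=1\}$. *)

(* Defs.v *)
From HB Require Import structures.
From mathcomp Require Import all_boot all_order all_algebra.
Set Implicit Arguments. Unset Strict Implicit. Unset Printing Implicit Defensive.
Import Order.TTheory GRing.Theory Num.Theory.
Local Open Scope ring_scope.

(* Scalars: an arbitrary numeric algebraically closed field C with conjugation
   (e.g. the complex numbers). A finite-dimensional C*-algebra is represented
   concretely as a *-subalgebra of 'M[C]_n (every finite-dimensional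
   C*-algebra is *-isomorphic to one, and conversely). *)

Definition adjmx (C : numClosedFieldType) (n : nat) (a : 'M[C]_n) : 'M[C]_n :=
  (map_mx Num.conj a)^T.

Definition is_star_subalg (C : numClosedFieldType) (n : nat)
    (A : 'M[C]_n -> Prop) : Prop :=
  [/\ A 0,
      (forall a b, A a -> A b -> A (a + b)),
      (forall (c : C) a, A a -> A (c *: a)),
      (forall a b, A a -> A b -> A (a *m b))
    & (forall a, A a -> A (adjmx a))].

Definition is_star_endo (C : numClosedFieldType) (n : nat)
    (A : 'M[C]_n -> Prop) (Phi : 'M[C]_n -> 'M[C]_n) : Prop :=
  [/\ (forall a, A a -> A (Phi a)),
      (forall a b, A a -> A b -> Phi (a + b) = Phi a + Phi b),
      (forall (c : C) a, A a -> Phi (c *: a) = c *: Phi a),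
      (forall a b, A a -> A b -> Phi (a *m b) = Phi a *m Phi b)
    & (forall a, A a -> Phi (adjmx a) = adjmx (Phi a))].

Definition spectrum (C : numClosedFieldType) (n : nat)
    (A : 'M[C]_n -> Prop) (Phi : 'M[C]_n -> 'M[C]_n) (l : C) : Prop :=
  exists a, [/\ A a, a != 0 & Phi a = l *: a].

(* Main.v *)
Require Import Defs.
From HB Require Import structures.
From mathcomp Require Import all_boot all_order all_algebra.
Import Order.TTheory GRing.Theory Num.Theory.
Local Open Scope ring_scope.

Section Adj.
Variables (C : numClosedFieldType) (n : nat).
Implicit Types x y : 'M[C]_n.

Lemma adjmxM x y : adjmx (x *m y) = adjmx y *m adjmx x.
Proof.
apply/matrixP => i j; rewrite !mxE rmorph_sum; apply: eq_bigr => k _.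
by rewrite !mxE rmorphM mulrC.
Qed.

Lemma adjmxZ (c : C) x : adjmx (c *: x) = c^* *: adjmx x.
Proof. by apply/matrixP => i j; rewrite !mxE rmorphM. Qed.

Lemma adjmxK x : adjmx (adjmx x) = x.
Proof. by apply/matrixP => i j; rewrite !mxE conjCK. Qed.

Lemma adjmx_mul_eq0 x : adjmx x *m x = 0 -> x = 0.
Proof.
move=> H; apply/matrixP => i j; rewrite mxE.
have := congr1 (fun m : 'M[C]_n => m j j) H; rewrite !mxE.
have E k : adjmx x j k * x k j = `|x k j| ^+ 2.
  by rewrite !mxE normCKC.
move=> h0; have h1 : \sum_(k < n) `|x k j| ^+ 2 = 0.
  by rewrite -[RHS]h0; apply: eq_bigr => k _; rewrite E.
move: h1 => /psumr_eq0P.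
move=> h; have /eqP := h (fun k _ => exprn_ge0 2 (normr_ge0 _)) i isT.
by rewrite sqrf_eq0 normr_eq0 => /eqP.
Qed.
End Adj.

Section Sq.
Variables (C : numClosedFieldType) (n' : nat).
Local Notation n := n'.+1.
Implicit Types x y b : 'M[C]_n.

Lemma adjmx_exp b : adjmx b = b -> forall k, adjmx (b ^+ k) = b ^+ k.
Proof.
move=> hb; elim=> [|k IH].
  by apply/matrixP => i j; rewrite !mxE eq_sym conjC_nat.
by rewrite exprSr -mulmxE adjmxM IH hb mulmxE -exprS exprSr.
Qed.

Lemma herm_nil b : adjmx b = b -> forall m, b ^+ m = 0 -> b = 0.
Proof.
move=> hb m hm.
have h2 : forall k, b ^+ (2 ^ k) = 0 -> b = 0.
  elim=> [|k IH]; first by rewrite expr1.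
  move=> h; apply: IH; apply: adjmx_mul_eq0.
  by rewrite adjmx_exp // mulmxE -exprD addnn -mul2n -expnS.
apply: (h2 m).
have hle : (m <= 2 ^ m)%N by apply: ltnW; apply: ltn_expl.
by rewrite -(subnKC hle) exprD hm mul0r.
Qed.
End Sq.
Lemma main_pos (C : numClosedFieldType) (n' : nat)
    (A : 'M[C]_n'.+1 -> Prop) (Phi : 'M[C]_n'.+1 -> 'M[C]_n'.+1) :
  is_star_subalg A -> is_star_endo A Phi ->
  forall (l : C) a, A a -> a != 0 -> Phi a = l *: a -> l != 0 -> `|l| = 1.
Proof.
rewrite /is_star_subalg /is_star_endo; move=> [A0 AD AZ AM AJ] [PA PD PZ PM PJ] l a Aa a0 Pa l0.
have P0 : Phi 0 = 0 by have := PZ 0 0 A0; rewrite !scale0r.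
pose b := adjmx a *m a.
pose c := l^* * l.
have Ab : A b by apply: AM => //; apply: AJ.
have Pb : Phi b = c *: b.
  by rewrite /b PM ?PJ ?Pa ?adjmxZ -?scalemxAl -?scalemxAr ?scalerA //; apply: AJ.
have b0 : b != 0 by apply/eqP => /adjmx_mul_eq0 /eqP; rewrite (negbTE a0).
have hb : adjmx b = b by rewrite /b adjmxM adjmxK.
have c0 : c != 0 by rewrite mulf_neq0 // conjC_eq0.
have K : forall r : {poly C}, A (horner_mx b ('X * r)) /\
    Phi (horner_mx b ('X * r)) = horner_mx (c *: b) ('X * r).
  elim/poly_ind => [|r k [IA IP]].
    by rewrite mulr0 !rmorph0 P0; split.
  rewrite mulrDr mulrA [('X * k%:P)]mulrC mul_polyC !rmorphD /=.
  rewrite (rmorphM (horner_mx b)) (rmorphM (horner_mx (c *: b))) /=.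
  rewrite !horner_mxZ /= !horner_mx_X -!mulmxE.
  split; first exact: AD (AM _ _ IA Ab) (AZ k _ Ab).
  by rewrite (PD _ _ (AM _ _ IA Ab) (AZ k _ Ab)) (PM _ _ IA Ab) (PZ _ _ Ab) IP Pb.
have CH : horner_mx (c *: b) ('X * char_poly b) = 0.
  by have [_ <-] := K (char_poly b); rewrite rmorphM /= Cayley_Hamilton mulr0 P0.
have chi0 : char_poly b != 0 by rewrite monic_neq0 // char_poly_monic.
have step : forall z, z != 0 -> root (char_poly b) z -> root (char_poly b) (c * z).
  move=> z z0 rz.
  have ev : eigenvalue (c *: b) (c * z).
    have /eigenvalueP [v hv v0] : eigenvalue b z by rewrite eigenvalue_root_char.
    by apply/eigenvalueP; exists v => //; rewrite -scalemxAr hv scalerA.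
  have : root ('X * char_poly b) (c * z).
    by apply: (root_dvdp (mxminpoly_min CH)); rewrite -eigenvalue_root_min.
  by rewrite mulrC rootE hornerMX mulf_eq0 mulf_eq0 (negbTE c0) (negbTE z0) /= orbF.
have iter : forall z, z != 0 -> root (char_poly b) z -> forall i, root (char_poly b) (c ^+ i * z).
  move=> z z0 rz; elim=> [|i IH]; first by rewrite mul1r.
  by rewrite exprS -mulrA; apply: step => //; rewrite mulf_neq0 // expf_neq0.
have [z z0 rz] : exists2 z, z != 0 & root (char_poly b) z.
  have [m [q hq eq]] := multiplicity_XsubC (char_poly b) 0.
  move: hq; rewrite chi0 /= => hq.
  case: (boolP (size q == 1)) => [/size_poly1P [u u0 qu] | /closed_rootP [z rz]].
    exfalso; move/eqP: b0; apply; apply: (@herm_nil _ _ b hb m).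
    have := Cayley_Hamilton b; rewrite eq qu polyC0 subr0 rmorphM rmorphXn /= horner_mx_C horner_mx_X.
    by rewrite -mulmxE mul_scalar_mx => /eqP; rewrite scaler_eq0 (negbTE u0) /= => /eqP.
  exists z; first by apply/eqP => ez; move: hq; rewrite -ez rz.
  by rewrite eq rootM rz.
pose N := size (char_poly b).
pose s := [seq c ^+ i * z | i <- iota 0 N].
have : ~~ uniq s.
  apply/negP => us.
  have al : all (root (char_poly b)) s by apply/allP => y /mapP [i _ ->]; exact: iter.
  by have := max_poly_roots chi0 al us; rewrite size_map size_iota ltnn.
case/(uniqPn 0) => i [j [ij jN e]]; rewrite size_map size_iota in jN.
have iN : (i < N)%N by apply: ltn_trans jN.
move: e; rewrite !(nth_map 0%N) ?size_iota ?nth_iota // !add0n => e.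
have e2 : c ^+ (j - i) = 1.
  move/(mulIf z0): e => e.
  have : c ^+ i * c ^+ (j - i) = c ^+ i * 1 by rewrite mulr1 -exprD subnKC // ltnW.
  by move/(mulfI (expf_neq0 i c0)).
move: e2; rewrite /c -normCKC -exprM => /eqP.
by rewrite pexpr_eq1 ?normr_ge0 ?muln_gt0 ?subn_gt0 // => /eqP.
Qed.

Theorem proposition3p6 (C : numClosedFieldType) (n : nat)
    (A : 'M[C]_n -> Prop) (Phi : 'M[C]_n -> 'M[C]_n) :
  is_star_subalg A -> is_star_endo A Phi ->
  forall l : C, spectrum A Phi l -> l = 0 \/ `|l| = 1.
Proof.
move=> hA hP l [a [Aa a0 Pa]].
have [->|l0] := eqVneq l 0; first by left.
right; case: n A Phi a hA hP Aa a0 Pa => [|n'] A Phi a hA hP Aa a0 Pa.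
  by move: a0; rewrite thinmx0 eqxx.
exact: (@main_pos C n' A Phi hA hP l a Aa a0 Pa l0).
Qed.
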